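(* Let $G$ be a finite group and $\xi$ a linear character of $G$. Then $$\tfrac12 n_C+n_\xi=\tfrac12 n^{C,\xi}\qquad\text{and}\qquad n_R-2n_\xi=n^{R,\xi}.$$
   Context: For conjugacy classes $C$ of $G$ let $C^{-1}=\{c^{-1}\mid c\in C\}$. $n_C$ = number of conjugacy classes with $C\neq C^{-1}$; $n_\xi$ = number of conjugacy classes with $C=C^{-1}$ and $\xi\equiv-1$ on $C$; $n_{**}=|\{C_g\cup C_{g^{-1}}\mid g\in G\}|$ and $n_R=n_{**}-\frac12n_C$ (the number of classes with $C=C^{-1}$); $n^{R,\xi}$ = number of irreducible characters $\chi$ with $\chi=\bar\chi\otimes\xi$; $n^{C,\xi}$ = number of irreducible characters $\chi$ with $\chi\neq\bar\chi\otimes\xi$. Here $\bar\chi\otimes\xi$ is $g\mapsto\overline{\chi(g)}\xi(g)$. *)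

(* Defs.v *)
From mathcomp Require Import all_boot all_order all_algebra all_fingroup all_solvable all_field all_character.
Set Implicit Arguments. Unset Strict Implicit. Unset Printing Implicit Defensive.
Import GRing.Theory Num.Theory.
Local Open Scope ring_scope.
Local Open Scope group_scope.

Section Counts.
Variables (gT : finGroupType) (G : {group gT}).

Definition cls_inv (C : {set gT}) : {set gT} := [set c^-1 | c in C].

Definition n_C : nat := #|[set C in classes G | cls_inv C != C]|.

Definition n_xi (xi : 'CF(G)) : nat :=
  #|[set C in classes G | (cls_inv C == C) && [forall c in C, xi c == -1]]|.

Definition n_starstar : nat := #|[set (g ^: G) :|: (g^-1 ^: G) | g in G]|.

(* n_R := n_** - 1/2 n_C  (the number of classes with C = C^{-1}) *)
Definition n_R : algC := (n_starstar%:R - (n_C%:R / 2%:R))%R.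

Definition twisted_real (xi : 'CF(G)) (i : Iirr G) : bool :=
  'chi_i == (('chi_i)^*%CF * xi)%R.

Definition nR_xi (xi : 'CF(G)) : nat := #|[set i : Iirr G | twisted_real xi i]|.
Definition nC_xi (xi : 'CF(G)) : nat := #|[set i : Iirr G | ~~ twisted_real xi i]|.

End Counts.

(* Main.v *)
Require Import Defs.
From mathcomp Require Import all_boot all_order all_algebra all_fingroup all_solvable all_field all_character.
From mathcomp Require Import ring.
Import GRing.Theory Num.Theory.
Local Open Scope ring_scope.

Lemma card_sumA (T : finType) (A : {pred T}) (P : pred T) :
  (#|[set x in A | P x]|)%:R = \sum_(x in A) (P x)%:R :> algC.
Proof.
rewrite -sum1_card natr_sum [LHS]big_mkcond [RHS]big_mkcond /=.
by apply: eq_bigr => x _; rewrite inE; case: (x \in A); case: (P x).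
Qed.

Lemma card_sumT (T : finType) (P : pred T) :
  (#|[set x | P x]|)%:R = \sum_x (P x)%:R :> algC.
Proof.
rewrite -sum1_card natr_sum [LHS]big_mkcond /=.
by apply: eq_bigr => x _; rewrite inE; case: (P x).
Qed.

Lemma card_sum1 (T : finType) (A : {set T}) : (#|A|)%:R = \sum_(x in A) (1 : algC).
Proof. by rewrite -sum1_card natr_sum. Qed.

Section S.
Local Open Scope group_scope.
Variables (gT : finGroupType) (G : {group gT}).

Lemma cls_invK (C : {set gT}) : cls_inv (cls_inv C) = C.
Proof.
rewrite /cls_inv -imset_comp (eq_imset _ (fun c => invgK c)) /=.
by rewrite imset_id.
Qed.

Lemma cls_invE x : cls_inv (x ^: G) = (x^-1)%g ^: G.
Proof.
rewrite classVg /cls_inv; apply/setP => y; rewrite inE.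
apply/imsetP/idP => [[c Hc ->]|Hy]; first by rewrite invgK.
by exists (y^-1)%g; rewrite ?invgK.
Qed.

Lemma cls_inv_classes C : C \in classes G -> cls_inv C \in classes G.
Proof. by case/imsetP => x Gx ->; rewrite [cls_inv _](cls_invE x) mem_classes ?groupV. Qed.

Lemma fiber C C0 : C \in classes G -> C0 \in classes G ->
  (C :|: cls_inv C == C0 :|: cls_inv C0) = (C == C0) || (C == cls_inv C0).
Proof.
case/imsetP => x Gx ->; case/imsetP => y Gy ->.
apply/idP/orP => [/eqP E | [/eqP -> // | /eqP ->]]; last first.
  by rewrite cls_invK setUC.
have : x \in x ^: G :|: cls_inv (x ^: G) by rewrite inE class_refl.
rewrite E [cls_inv _](cls_invE y) inE => /orP[/class_eqP -> | /class_eqP ->]; first by left.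
by right.
Qed.

End S.
Section S2.
Variables (gT : finGroupType) (G : {group gT}).
Lemma nss : (n_starstar G)%:R =
  (#|[set C in classes G | cls_inv C == C]|)%:R + (n_C G)%:R / 2%:R :> algC.
Proof.
pose f := fun C : {set gT} => C :|: cls_inv C.
have E : [set (g ^: G)%g :|: ((g^-1)%g ^: G)%g | g in G] = f @: classes G.
  apply/setP => S; apply/imsetP/imsetP => [[g Gg ->]|[C /imsetP[g Gg ->] ->]].
    exists (g ^: G)%g; first exact: mem_classes.
    by rewrite /f [cls_inv _](@cls_invE _ G g).
  by exists g => //; rewrite /f [cls_inv _](@cls_invE _ G g).
rewrite /n_starstar E.
pose w := fun C : {set gT} => if cls_inv C == C then 1 else 2%:R^-1 : algC.
rewrite (@card_sum1 _ (f @: classes G)).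
rewrite (eq_bigr (fun S => \sum_(C in classes G | f C == S) w C)%R).
  rewrite -partition_big_imset /n_C !card_sumA mulr_suml -big_split /=.
  apply: eq_bigr => C _; rewrite /w; case: (cls_inv C =P C) => _ /=.
    by rewrite mul0r addr0.
  by rewrite add0r mul1r.
move=> S /imsetP[C0 HC0 ->].
have HC0' := @cls_inv_classes _ G _ HC0.
rewrite (eq_bigl (fun C => C \in [set C0; cls_inv C0])); last first.
  move=> C; rewrite !inE /=; case HC: (C \in classes G) => /=.
    by rewrite /f (@fiber _ G).
  apply/esym/negbTE/orP => [[/eqP E'|/eqP E']]; rewrite E' in HC.
    by rewrite HC0 in HC.
  by rewrite HC0' in HC.
case: (cls_inv C0 =P C0) => H.
  by rewrite H setUid big_set1 /w H eqxx.
rewrite big_setU1 ?big_set1 /=; last first.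
  by rewrite inE; apply/eqP => E2; apply: H; rewrite -E2.
rewrite /w cls_invK (negbTE (introN eqP H)).
have H' : (C0 == cls_inv C0) = false by rewrite eq_sym; apply/negbTE/eqP.
rewrite H'. field. by [].
Qed.

End S2.

Section S3.
Variables (gT : finGroupType) (G : {group gT}) (xi : 'CF(G)).
Hypothesis Hxi : xi \is a linear_char.

Lemma step_irr : (nR_xi xi)%:R =
  \sum_(x in G) #|G|%:R^-1 * ((xi x)^* * (#|('C_G[x])%g|%:R *+ (x \in ((x^-1)%g ^: G)%g))).
Proof.
rewrite /nR_xi card_sumT.
transitivity (\sum_i '['chi[G]_i, ('chi_i)^*%CF * xi]).
  apply: eq_bigr => i _.
  have Hirr : ('chi[G]_i)^*%CF * xi \in irr G by rewrite mulrC mul_lin_irr ?cfConjC_irr.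
  have := cfIirrE Hirr; set j := cfIirr _ => Ej.
  by rewrite /twisted_real -Ej cfdot_irr (inj_eq irr_inj).
rewrite (eq_bigr (fun i => #|G|%:R^-1 * \sum_(x in G) (xi x)^* * ('chi[G]_i x * ('chi_i (x^-1)%g)^*))).
  rewrite -!mulr_sumr; congr (_ * _); rewrite exchange_big /=; apply: eq_bigr => x Gx.
  by rewrite -mulr_sumr second_orthogonality_relation ?groupV.
move=> i _; rewrite cfdotE; congr (_ * _); apply: eq_bigr => x Gx.
rewrite !cfunE rmorphM /= conjCK irr_inv conjCK.
ring.
Qed.

Lemma step_cls :
  \sum_(x in G) #|G|%:R^-1 * ((xi x)^* * (#|('C_G[x])%g|%:R *+ (x \in ((x^-1)%g ^: G)%g)))
  = (#|[set C in classes G | cls_inv C == C]|)%:R - 2%:R * (n_xi xi)%:R.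
Proof.
pose E := fun x => #|G|%:R^-1 * ((xi x)^* * (#|('C_G[x])%g|%:R *+ (x \in ((x^-1)%g ^: G)%g))).
have Hs : \sum_(x in G) E x = \sum_(C in classes G) \sum_(x in C) E x.
  rewrite -{1}(cover_partition (classes_partition G)) big_trivIset //.
  by case/and3P: (classes_partition G).
rewrite Hs.
rewrite /n_xi !card_sumA mulr_sumr -sumrB; apply: eq_bigr => C /imsetP[y Gy ->].
have nzG : #|G|%:R != 0 :> algC by rewrite pnatr_eq0 -lt0n cardG_gt0.
have nzC : #|(y ^: G)%g|%:R != 0 :> algC.
  by rewrite pnatr_eq0 -lt0n card_gt0; apply/set0Pn; exists y; exact: class_refl.
have HE : forall x, x \in (y ^: G)%g -> E x =
   (xi y)^* * ((y ^: G)%g == cls_inv (y ^: G)%g)%:R / #|(y ^: G)%g|%:R.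
  move=> x /imsetP[g Gg ->].
  have Gyg : (y ^ g)%g \in G by rewrite groupJ.
  rewrite /E cfunJ // -conjVg.
  have -> : ((y ^ g)%g \in ((y^-1 ^ g) ^: G)%g) = ((y ^: G)%g == cls_inv (y ^: G)%g).
    rewrite [cls_inv _](@cls_invE _ G y) classGidl //.
    apply/class_eqP/eqP => H; first by rewrite -(classGidl y Gg) H.
    by rewrite classGidl.
  have HL := Lagrange (subsetIl G 'C[y ^ g]%g).
  rewrite index_cent1 classGidl // in HL.
  have -> : #|('C_G[y ^ g])%g|%:R = #|G|%:R / #|(y ^: G)%g|%:R :> algC.
    by rewrite -HL natrM mulfK.
  rewrite -mulr_natr; field; exact/andP.
rewrite (eq_bigr _ HE) sumr_const.
have -> : forall a : algC, a / #|(y ^: G)%g|%:R *+ #|(y ^: G)%g| = a.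
  by move=> a; rewrite -mulr_natr mulfVK.
rewrite [cls_inv _ == _]eq_sym.
case: eqP => Hs0 /=; last by rewrite mulr0 mulr0 subr0.
have Hyi : (y^-1)%g \in (y ^: G)%g by rewrite {1}Hs0 [cls_inv _](@cls_invE _ G y) class_refl.
have Fy : [forall c in (y ^: G)%g, xi c == -1] = (xi y == -1).
  apply/forall_inP/eqP => [H | H c /imsetP[g Gg ->]]; first exact/eqP/H/class_refl.
  by rewrite cfunJ // H.
have Xi : xi (y^-1)%g = xi y by case/imsetP: Hyi => g Gg ->; rewrite cfunJ.
have Cj : (xi y)^* = xi y by rewrite -(lin_charV_conj Hxi Gy) Xi.
have Sq : xi y ^+ 2 = 1.
  by rewrite expr2 -{1}Xi (lin_charV Hxi Gy) mulVf // (lin_char_neq0 Hxi Gy).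
rewrite Fy Cj.
have := sqrf_eq1 (xi y); rewrite Sq eqxx => /esym/orP[/eqP -> | /eqP ->].
  have -> : (1 == -1 :> algC) = false.
    apply/negbTE/eqP => H; have : (2%:R : algC) == 0 by rewrite mulr2n {2}H subrr.
    by rewrite pnatr_eq0.
  by rewrite /= mulr1 mulr0 subr0.
by rewrite eqxx /= mulr1; ring.
Qed.

End S3.

Theorem theorem3p9 (gT : finGroupType) (G : {group gT}) (xi : 'CF(G))
  (Hxi : xi \is a linear_char) :
  (n_C G)%:R / 2%:R + (n_xi xi)%:R = (nC_xi xi)%:R / 2%:R :> algC /\
  n_R G - 2%:R * (n_xi xi)%:R = (nR_xi xi)%:R :> algC.
Proof.
set Rc := (#|[set C in classes G | cls_inv C == C]|)%:R : algC.
have H1 := @nss _ G.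
have H2 : (nR_xi xi)%:R = Rc - 2%:R * (n_xi xi)%:R by rewrite (@step_irr _ G xi Hxi) (@step_cls _ G xi Hxi).
have H3 : (nR_xi xi)%:R + (nC_xi xi)%:R = (#|classes G|)%:R :> algC.
  rewrite /nR_xi /nC_xi !card_sumT -big_split /= (eq_bigr (fun _ => 1)).
    by rewrite sumr_const card_ord NirrE.
  by move=> i _; case: (twisted_real xi i); rewrite /= ?addr0 ?add0r.
have H4 : Rc + (n_C G)%:R = (#|classes G|)%:R :> algC.
  rewrite /Rc /n_C !card_sumA -big_split /= (eq_bigr (fun _ => 1)).
    by rewrite sumr_const.
  by move=> C _; case: (cls_inv C == C); rewrite /= ?addr0 ?add0r.
have HR : n_R G = Rc by rewrite /n_R H1 addrK.
rewrite HR -H2; split => //.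
have -> : (nC_xi xi)%:R = (#|classes G|)%:R - (nR_xi xi)%:R :> algC by rewrite -H3; ring.
rewrite -H4 H2. field. by [].
Qed.
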